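(* Let $M:[0,\infty)\to\mathbb{R}$ be continuous and satisfy condition (M3) for some $\gamma>0$ (see context), and let $T\ge 0$. Define functions on $[T,\infty)$ by $q_1(t):=M(t)$, $Q_k(t):=-\int_t^\infty q_k(s)\,ds$ for $k\ge1$, and $q_k(t):=\sum_{j=1}^{k-1}Q_j(t)Q_{k-j}(t)$ for $k\ge 2$, and set $\phi(t):=-\int_t^\infty Q_2(s)\,ds$. Then $Q_2(t)\le 0$ for $t\ge T$, and for every integer $k\ge 2$ and every $t\ge T$, $$|Q_k(t)|\le 4^{k-1}\big(-Q_2(t)\big)\,\phi(t)^{\frac{k-2}{2}}.$$
   Context: Condition (M3) (with $\gamma>0$): $\big|\int_t^\infty M(s)\,ds\big|\lesssim(1+t)^{-\gamma}$, $\int_t^\infty\big(\int_s^\infty M(\sigma)\,d\sigma\big)^2ds\lesssim(1+t)^{-\gamma}$ for $t\ge 0$, and $\int_0^\infty\int_t^\infty\big(\int_s^\infty M(\sigma)\,d\sigma\big)^2\,ds\,dt<\infty$; here $f\lesssim g$ means $f\le Cg$ with $C$ independent of $t$. *)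

(* Defs.v *)
From Stdlib Require Import Reals Lra List.
From Coquelicot Require Import Coquelicot.
Import ListNotations.
Open Scope R_scope.

Definition iint (f : R -> R) (t : R) : R :=
  real (Lim (fun x => RInt f t x) p_infty).

Definition has_iint (f : R -> R) (t : R) : Prop :=
  ex_finite_lim (fun x => RInt f t x) p_infty.

(* Given the list L = [Q_1; ...; Q_m] (m = length L), the next density
   q_{m+1}: q_1 = M, and for k = m+1 >= 2,
   q_k(t) = sum_{j=1}^{k-1} Q_j(t) Q_{k-j}(t)
   (index i = j-1 ranges over 0..m-1, and Q_{k-j} = nth (m-1-i) L). *)
Definition qnext (M : R -> R) (L : list (R -> R)) : R -> R :=
  match L with
  | [] => M
  | _ => fun t => sum_f_R0
           (fun i => nth i L (fun _ => 0) t * nth (length L - 1 - i) L (fun _ => 0) t)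
           (length L - 1)
  end.

(* Qlist M n = [Q_1; ...; Q_n], with Q_k(t) = - \int_t^\infty q_k(s) ds. *)
Fixpoint Qlist (M : R -> R) (n : nat) : list (R -> R) :=
  match n with
  | O => []
  | S m => let L := Qlist M m in L ++ [fun t => - iint (qnext M L) t]
  end.

Definition Qk (M : R -> R) (k : nat) : R -> R :=
  nth (k - 1) (Qlist M k) (fun _ => 0).

Definition qk (M : R -> R) (k : nat) : R -> R := qnext M (Qlist M (k - 1)).

Definition phi (M : R -> R) (t : R) : R := - iint (Qk M 2) t.

(* Main.v *)
Require Import Defs.
From Stdlib Require Import Reals Lra Lia List FunctionalExtensionality.
From Coquelicot Require Import Coquelicot.
Import ListNotations.
Open Scope R_scope.

Lemma RInt_scalR (f : R -> R) a b c : ex_RInt f a b -> RInt (fun x => c * f x) a b = c * RInt f a b.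
Proof. intro H. exact (RInt_scal (V:=R_CompleteNormedModule) f a b c H). Qed.
Lemma RInt_plusR (f g : R -> R) a b : ex_RInt f a b -> ex_RInt g a b -> RInt (fun x => f x + g x) a b = RInt f a b + RInt g a b.
Proof. intros H1 H2. exact (RInt_plus (V:=R_CompleteNormedModule) f g a b H1 H2). Qed.
Lemma RInt_minusR (f g : R -> R) a b : ex_RInt f a b -> ex_RInt g a b -> RInt (fun x => f x - g x) a b = RInt f a b - RInt g a b.
Proof. intros H1 H2. exact (RInt_minus (V:=R_CompleteNormedModule) f g a b H1 H2). Qed.
Lemma RInt_ChaslesR (f : R -> R) a b c : ex_RInt f a b -> ex_RInt f b c -> RInt f a b + RInt f b c = RInt f a c.
Proof. intros H1 H2. exact (RInt_Chasles (V:=R_CompleteNormedModule) f a b c H1 H2). Qed.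

Ltac req := intros; match goal with |- ?a = ?b => change (@eq R a b) end; ring.

Definition ext (f : R -> R) : R -> R := fun y => f (Rmax 0 y).
Definition CC (f : R -> R) : Prop := forall y, continuous (ext f) y.

Lemma Rmax0_id x : 0 <= x -> Rmax 0 x = x.
Proof. intros; unfold Rmax; destruct (Rle_dec 0 x); lra. Qed.

Lemma Rmax0_ge y : 0 <= Rmax 0 y.
Proof. apply Rmax_l. Qed.

Lemma cont_Rmax0 y : continuous (fun z => Rmax 0 z) y.
Proof.
  apply continuous_ext with (f := fun z => (z + Rabs z) * / 2).
  { intro z; unfold Rmax, Rabs; destruct (Rle_dec 0 z), (Rcase_abs z); lra. }
  apply (continuous_mult (fun z => z + Rabs z) (fun _ => / 2)).
  - apply (continuous_plus (fun z => z) (fun z => Rabs z)).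
    + apply continuous_id.
    + apply continuous_Rabs.
  - apply continuous_const.
Qed.

Lemma cont_pow (f : R -> R) n x : continuous f x -> continuous (fun y => f y ^ n) x.
Proof.
  intro H; induction n as [|n IH]; simpl.
  - apply continuous_const.
  - apply (continuous_mult f (fun y => f y ^ n)); auto.
Qed.

Lemma CC_RInt f a b : CC f -> 0 <= a -> 0 <= b -> ex_RInt f a b.
Proof.
  intros Hf Ha Hb.
  apply ex_RInt_ext with (ext f).
  { intros x Hx. unfold ext. rewrite Rmax0_id; auto.
    destruct Hx as [H1 _]. assert (0 <= Rmin a b) by (apply Rmin_glb; auto). lra. }
  apply (ex_RInt_continuous (V:=R_CompleteNormedModule)). intros; apply Hf.
Qed.

Lemma RInt_ext0 f a b : 0 <= a -> 0 <= b -> RInt f a b = RInt (ext f) a b.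
Proof.
  intros Ha Hb. apply RInt_ext. intros x Hx. unfold ext. rewrite Rmax0_id; auto.
  destruct Hx as [H1 _]. assert (0 <= Rmin a b) by (apply Rmin_glb; auto). lra.
Qed.

Lemma CC_mult f g : CC f -> CC g -> CC (fun t => f t * g t).
Proof. intros Hf Hg y. exact (continuous_mult (ext f) (ext g) y (Hf y) (Hg y)). Qed.
Lemma CC_plus f g : CC f -> CC g -> CC (fun t => f t + g t).
Proof. intros Hf Hg y. exact (continuous_plus (ext f) (ext g) y (Hf y) (Hg y)). Qed.
Lemma CC_opp f : CC f -> CC (fun t => - f t).
Proof. intros Hf y. exact (continuous_opp (ext f) y (Hf y)). Qed.
Lemma CC_const c : CC (fun _ => c).
Proof. intros y. apply continuous_const. Qed.
Lemma CC_abs f : CC f -> CC (fun t => Rabs (f t)).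
Proof. intros Hf y. apply (continuous_Rabs_comp (ext f)). apply Hf. Qed.
Lemma CC_sqrt f : CC f -> CC (fun t => sqrt (f t)).
Proof. intros Hf y. apply (continuous_comp (ext f) sqrt). apply Hf. apply continuous_sqrt. Qed.
Lemma CC_pow f n : CC f -> CC (fun t => f t ^ n).
Proof. intros Hf y. apply (cont_pow (ext f)). apply Hf. Qed.
Lemma CC_ext f g : (forall t, 0 <= t -> f t = g t) -> CC f -> CC g.
Proof.
  intros E Hf y. apply continuous_ext with (ext f); auto.
  intro z; unfold ext; apply E, Rmax0_ge.
Qed.
Lemma CC_sum (F : nat -> R -> R) n :
  (forall i, (i <= n)%nat -> CC (F i)) -> CC (fun t => sum_f_R0 (fun i => F i t) n).
Proof.
  induction n as [|n IH]; intro H; simpl.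
  - apply H; lia.
  - apply CC_plus. apply IH; intros; apply H; lia. apply H; lia.
Qed.

Lemma iint_spec f t l : is_lim (fun x => RInt f t x) p_infty (Finite l) -> iint f t = l.
Proof. intro H. unfold iint. rewrite (is_lim_unique _ _ _ H). reflexivity. Qed.

Lemma has_iint_spec f t : has_iint f t -> is_lim (fun x => RInt f t x) p_infty (Finite (iint f t)).
Proof. intros [l Hl]. rewrite (iint_spec _ _ _ Hl). exact Hl. Qed.

Lemma mono_lim (P : R -> R) t B :
  (forall x y, t <= x -> x <= y -> P x <= P y) -> (forall x, t <= x -> P x <= B) ->
  exists l, is_lim P p_infty (Finite l) /\ l <= B.
Proof.
  intros Hm Hb.
  set (E := fun r => exists x, t <= x /\ r = P x).
  destruct (completeness E) as [L [HL1 HL2]].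
  { exists B. intros r [x [Hx ->]]. auto. }
  { exists (P t), t. split; auto; lra. }
  exists L. split.
  - apply is_lim_spec. intro eps. simpl.
    assert (exists x, t <= x /\ L - eps < P x) as [x0 [Hx0 Hx0']].
    { destruct (Rlt_or_le (L - eps) (P t)) as [h|h].
      - exists t; split; auto; lra.
      - apply Classical_Prop.NNPP; intro N.
        assert (is_upper_bound E (L - eps)).
        { intros r [x [Hx ->]]. apply Rnot_lt_le. intro h'. apply N. exists x; auto. }
        specialize (HL2 _ H). destruct eps; simpl in *; lra. }
    exists x0. intros y Hy.
    assert (P y <= L) by (apply HL1; exists y; split; auto; lra).
    assert (P x0 <= P y) by (apply Hm; lra).
    rewrite Rabs_left1; lra.
  - apply HL2. intros r [x [Hx ->]]; auto.
Qed.

Lemma eventually_ge t : Rbar_locally' p_infty (fun x => t <= x).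
Proof. exists t. intros; lra. Qed.

Lemma lim_le_const (F : R -> R) l c t :
  is_lim F p_infty (Finite l) -> (forall x, t <= x -> F x <= c) -> l <= c.
Proof.
  intros H1 H2.
  assert (H := is_lim_le_loc F (fun _ => c) p_infty l c).
  simpl in H. apply H; auto. exists t; intros; apply H2; lra. apply is_lim_const.
Qed.
Lemma lim_ge_const (F : R -> R) l c t :
  is_lim F p_infty (Finite l) -> (forall x, t <= x -> c <= F x) -> c <= l.
Proof.
  intros H1 H2.
  assert (H := is_lim_le_loc (fun _ => c) F p_infty c l).
  simpl in H. apply H; auto. exists t; intros; apply H2; lra. apply is_lim_const.
Qed.

Lemma RInt_abs_bound f a b : a <= b -> CC f -> 0 <= a -> RInt f a b <= RInt (fun u => Rabs (f u)) a b.
Proof.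
  intros Hab Hf Ha. eapply Rle_trans. apply Rle_abs. apply abs_RInt_le; auto.
  apply CC_RInt; auto; lra.
Qed.

Lemma ABS f t B : 0 <= t -> CC f ->
  (forall x, t <= x -> RInt (fun u => Rabs (f u)) t x <= B) ->
  has_iint f t /\ Rabs (iint f t) <= B.
Proof.
  intros Ht Hf HB.
  assert (Ha : CC (fun u => Rabs (f u))) by (apply CC_abs; auto).
  assert (Hg : CC (fun u => Rabs (f u) + f u)) by (apply CC_plus; auto).
  assert (Hmono : forall h, CC h -> (forall u, 0 <= u -> 0 <= h u) ->
     forall x y, t <= x -> x <= y -> RInt h t x <= RInt h t y).
  { intros h Hh Hp x y Hx Hy.
    rewrite <- (RInt_ChaslesR h t x y); try (apply CC_RInt; auto; lra).
    assert (0 <= RInt h x y). { apply RInt_ge_0; auto. apply CC_RInt; auto; lra.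
      intros; apply Hp; lra. }
    lra. }
  destruct (mono_lim (fun x => RInt (fun u => Rabs (f u)) t x) t B) as [l1 [Hl1 _]].
  { apply Hmono; auto. intros; apply Rabs_pos. }
  { auto. }
  destruct (mono_lim (fun x => RInt (fun u => Rabs (f u) + f u) t x) t (2 * B)) as [l2 [Hl2 _]].
  { apply Hmono; auto. intros u _. pose proof (Rle_abs (- f u)). rewrite Rabs_Ropp in H. lra. }
  { intros x Hx. specialize (HB x Hx).
    assert (RInt (fun u => Rabs (f u) + f u) t x <= RInt (fun u => Rabs (f u) + Rabs (f u)) t x).
    { apply RInt_le; auto. apply CC_RInt; auto; lra. apply CC_RInt; auto. apply CC_plus; auto. lra.
      intros; pose proof (Rle_abs (f x0)); lra. }
    assert (E : RInt (fun u => Rabs (f u) + Rabs (f u)) t x = 2 * RInt (fun u => Rabs (f u)) t x).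
    { rewrite (RInt_ext _ (fun u => 2 * (Rabs (f u)))). rewrite RInt_scalR. reflexivity. apply CC_RInt. exact Ha. lra. lra.
      req. }
    lra. }
  assert (Hlim : is_lim (fun x => RInt f t x) p_infty (Finite (l2 - l1))).
  { apply is_lim_ext_loc with (fun x => RInt (fun u => Rabs (f u) + f u) t x - RInt (fun u => Rabs (f u)) t x).
    { exists t. intros x Hx.
      rewrite (RInt_ext f (fun u => (Rabs (f u) + f u) - (Rabs (f u)))).
      { rewrite RInt_minusR. reflexivity. apply CC_RInt; auto; lra. apply CC_RInt; auto; lra. }
      req. }
    apply (is_lim_minus' _ _ p_infty l2 l1); auto. }
  split. { exists (l2 - l1); auto. }
  rewrite (iint_spec _ _ _ Hlim). apply Rabs_le. split.
  { apply lim_ge_const with (fun x => RInt f t x) t; auto.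
    intros x Hx. specialize (HB x Hx).
    assert (Rabs (RInt f t x) <= RInt (fun u => Rabs (f u)) t x).
    { apply abs_RInt_le; auto. apply CC_RInt; auto; lra. }
    pose proof (Rle_abs (- RInt f t x)). rewrite Rabs_Ropp in H0. lra. }
  { apply lim_le_const with (fun x => RInt f t x) t; auto.
    intros x Hx. specialize (HB x Hx).
    assert (Rabs (RInt f t x) <= RInt (fun u => Rabs (f u)) t x).
    { apply abs_RInt_le; auto. apply CC_RInt; auto; lra. }
    pose proof (Rle_abs (RInt f t x)). lra. }
Qed.
Lemma derF f : CC f -> forall z, is_derive (fun b => RInt (ext f) 0 b) z (ext f z).
Proof.
  intros Hf z. apply (is_derive_RInt (V:=R_NormedModule) (ext f) (fun b => RInt (ext f) 0 b) 0 z).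
  { apply filter_forall. intro b. apply (RInt_correct (V:=R_CompleteNormedModule)).
    apply (ex_RInt_continuous (V:=R_CompleteNormedModule)). intros; apply Hf. }
  apply Hf.
Qed.

Lemma contF f : CC f -> forall z, continuous (fun b => RInt (ext f) 0 b) z.
Proof. intros Hf z. apply (ex_derive_continuous (K:=R_AbsRing) (V:=R_NormedModule)). eexists. apply derF; auto. Qed.

Lemma tail f t u : CC f -> 0 <= t -> 0 <= u -> has_iint f u ->
  has_iint f t /\ iint f t = iint f u + RInt f t u.
Proof.
  intros Hf Ht Hu Hi.
  assert (H : is_lim (fun x => RInt f t x) p_infty (Finite (RInt f t u + iint f u))).
  { apply is_lim_ext_loc with (fun x => RInt f t u + RInt f u x).
    { exists 0. intros x Hx. apply RInt_ChaslesR; apply CC_RInt; auto; lra. }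
    apply (is_lim_plus' _ _ p_infty). apply is_lim_const. apply has_iint_spec; auto. }
  split. { eexists; eauto. }
  rewrite (iint_spec _ _ _ H). ring.
Qed.

Lemma tail0 f t : CC f -> 0 <= t -> has_iint f 0 -> iint f t = iint f 0 - RInt (ext f) 0 t.
Proof.
  intros Hf Ht Hi. destruct (tail f t 0 Hf Ht (Rle_refl 0) Hi) as [_ E].
  rewrite E. rewrite <- (opp_RInt_swap (V:=R_CompleteNormedModule) f 0 t) by (apply CC_RInt; auto; lra).
  rewrite (RInt_ext0 f 0 t) by lra. change (iint f 0 + - RInt (ext f) 0 t = iint f 0 - RInt (ext f) 0 t). ring.
Qed.

Lemma CC_iint f : CC f -> has_iint f 0 -> CC (iint f).
Proof.
  intros Hf Hi. apply CC_ext with (fun t => iint f 0 - RInt (ext f) 0 t).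
  { intros t Ht. rewrite (tail0 f t); auto. }
  intro y. unfold ext at 1.
  apply (continuous_minus (fun _ => iint f 0) (fun y => RInt (ext f) 0 (Rmax 0 y))).
  apply continuous_const.
  apply (continuous_comp (fun z => Rmax 0 z) (fun b => RInt (ext f) 0 b)).
  apply cont_Rmax0. apply contF; auto.
Qed.

Lemma iint_nonneg f t : CC f -> 0 <= t -> has_iint f t -> (forall u, t <= u -> 0 <= f u) -> 0 <= iint f t.
Proof.
  intros Hf Ht Hi Hp. apply lim_ge_const with (fun x => RInt f t x) t.
  apply has_iint_spec; auto.
  intros x Hx. apply RInt_ge_0; auto. apply CC_RInt; auto; lra. intros; apply Hp; lra.
Qed.

Lemma iint_opp f t : CC f -> 0 <= t -> has_iint f t -> iint (fun s => - f s) t = - iint f t.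
Proof.
  intros Hf Ht Hi. apply iint_spec.
  apply is_lim_ext_loc with (fun x => - RInt f t x).
  { exists 0. intros x Hx. rewrite (RInt_ext (fun s => - f s) (fun s => -1 * f s)).
    rewrite RInt_scalR. ring. apply CC_RInt; auto; lra. req. }
  apply (is_lim_opp _ p_infty (Finite (iint f t))). apply has_iint_spec; auto.
Qed.

Lemma eps_lim X c y n : (forall e, 0 < e -> X <= c * sqrt (y + e) ^ n) -> X <= c * sqrt y ^ n.
Proof.
  intro H.
  set (h := fun e => c * sqrt (y + e) ^ n).
  assert (Hc : continuous h 0).
  { unfold h. apply (continuous_mult (fun _ => c) (fun e => sqrt (y + e) ^ n)).
    apply continuous_const. apply (cont_pow (fun e => sqrt (y + e))).
    apply (continuous_comp (fun e => y + e) sqrt).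
    apply (continuous_plus (fun _ => y) (fun e => e)). apply continuous_const. apply continuous_id.
    apply continuous_sqrt. }
  apply Rnot_lt_le. intro Hlt.
  assert (Hpos : 0 < X - h 0). { unfold h. rewrite Rplus_0_r. lra. }
  apply filterlim_locally with (eps := mkposreal _ Hpos) in Hc.
  destruct Hc as [d Hd].
  assert (Hb : ball 0 d (d / 2)).
  { change (Rabs (d / 2 - 0) < d). destruct d as [d dp]; simpl.
    rewrite Rabs_pos_eq; lra. }
  specialize (Hd _ Hb). change (Rabs (h (d/2) - h 0) < X - h 0) in Hd.
  assert (X <= h (d / 2)). { apply H. destruct d; simpl; lra. }
  pose proof (Rle_abs (h (d/2) - h 0)). lra.
Qed.

Lemma Qlist_length M n : length (Qlist M n) = n.
Proof. induction n; simpl; auto. rewrite length_app, IHn; simpl; lia. Qed.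

Lemma Qlist_prefix M n m i d : (i < n)%nat -> nth i (Qlist M n) d = nth i (Qlist M (n + m)) d.
Proof.
  intro H. induction m as [|m IH].
  { rewrite Nat.add_0_r; auto. }
  rewrite Nat.add_succ_r. simpl. rewrite app_nth1. auto. rewrite Qlist_length; lia.
Qed.

Lemma Qk_nth M j n : (1 <= j <= n)%nat -> nth (j - 1) (Qlist M n) (fun _ => 0) = Qk M j.
Proof.
  intro H. unfold Qk. replace n with (j + (n - j))%nat by lia.
  symmetry. apply Qlist_prefix. lia.
Qed.

Lemma Qk_def M n : Qk M (S n) = fun t => - iint (qk M (S n)) t.
Proof.
  unfold Qk, qk. simpl. rewrite Nat.sub_0_r.
  rewrite app_nth2; rewrite Qlist_length. rewrite Nat.sub_diag. reflexivity. lia.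
Qed.

Lemma qk1 M : qk M 1 = M.
Proof. reflexivity. Qed.

Lemma Qk1 M : Qk M 1 = fun t => - iint M t.
Proof. reflexivity. Qed.

Lemma qnext_ne M L t : L <> [] -> qnext M L t =
  sum_f_R0 (fun i => nth i L (fun _ => 0) t * nth (length L - 1 - i) L (fun _ => 0) t) (length L - 1).
Proof. destruct L. intro H; congruence. reflexivity. Qed.

Lemma qk_sum M p t : qk M (S (S p)) t = sum_f_R0 (fun i => Qk M (S i) t * Qk M (S (p - i)) t) p.
Proof.
  unfold qk. replace (S (S p) - 1)%nat with (S p) by lia.
  rewrite qnext_ne. 2:{ intro E. apply (f_equal (@length _)) in E. rewrite Qlist_length in E. simpl in E. lia. }
  rewrite Qlist_length. replace (S p - 1)%nat with p by lia.
  apply sum_eq. intros i Hi.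
  rewrite <- (Qk_nth M (S i) (S p)) by lia. rewrite <- (Qk_nth M (S (p - i)) (S p)) by lia.
  replace (S i - 1)%nat with i by lia. replace (S (p - i) - 1)%nat with (p - i)%nat by lia.
  replace (S p - 1 - i)%nat with (p - i)%nat by lia. reflexivity.
Qed.

Lemma Qk2 M t : Qk M 2 t = - iint (fun s => (iint M s) ^ 2) t.
Proof.
  rewrite Qk_def. f_equal. f_equal. apply functional_extensionality. intro s.
  rewrite qk_sum. simpl. rewrite Qk1. ring.
Qed.

Definition Good (M : R -> R) : Prop :=
  CC M /\ (forall t, 0 <= t -> has_iint M t) /\
  (forall t, 0 <= t -> has_iint (fun s => (iint M s) ^ 2) t) /\
  has_iint (fun t => iint (fun s => (iint M s) ^ 2) t) 0.

Definition sq M := fun s => (iint M s) ^ 2.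
Definition A M := fun t => iint (sq M) t.
Definition Phi M := fun t => iint (A M) t.
Definition Sf M := fun t => sqrt (Phi M t).

Lemma is_derive_eq (f : R -> R) x l l' : is_derive f x l -> l = l' -> is_derive f x l'.
Proof. intros H ->; auto. Qed.

Section S.
Variable M : R -> R.
Variable HG : Good M.

Lemma CC_M : CC M. Proof. apply HG. Qed.
Lemma CC_I1 : CC (fun t => iint M t).
Proof. destruct HG as (H1 & H2 & _). apply CC_iint; auto. apply H2; lra. Qed.
Lemma CC_sq : CC (sq M).
Proof. apply CC_pow, CC_I1. Qed.
Lemma has_sq t : 0 <= t -> has_iint (sq M) t.
Proof. apply HG. Qed.
Lemma CC_A : CC (A M).
Proof. apply CC_iint. apply CC_sq. apply has_sq; lra. Qed.
Lemma sq_nonneg u : 0 <= sq M u.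
Proof. unfold sq. apply pow2_ge_0. Qed.
Lemma A_nonneg t : 0 <= t -> 0 <= A M t.
Proof. intro. apply iint_nonneg; auto using CC_sq, has_sq. intros; apply sq_nonneg. Qed.
Lemma A_split t u : 0 <= t -> 0 <= u -> A M t = A M u + RInt (sq M) t u.
Proof. intros. apply tail; auto using CC_sq, has_sq. Qed.
Lemma A_mono t u : 0 <= t -> t <= u -> A M u <= A M t.
Proof.
  intros. rewrite (A_split t u); try lra.
  assert (0 <= RInt (sq M) t u). { apply RInt_ge_0; auto. apply CC_RInt; auto using CC_sq; lra. intros; apply sq_nonneg. }
  lra.
Qed.
Lemma RInt_sq_le t x : 0 <= t -> t <= x -> RInt (sq M) t x <= A M t.
Proof. intros. rewrite (A_split t x); try lra. pose proof (A_nonneg x). lra. Qed.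
Lemma has_A0 : has_iint (A M) 0.
Proof. apply HG. Qed.
Lemma has_A t : 0 <= t -> has_iint (A M) t.
Proof. intro. apply (tail (A M) t 0); auto using CC_A, has_A0; lra. Qed.
Lemma CC_Phi : CC (Phi M).
Proof. apply CC_iint. apply CC_A. apply has_A0. Qed.
Lemma Phi_nonneg t : 0 <= t -> 0 <= Phi M t.
Proof. intro. apply iint_nonneg; auto using CC_A, has_A. intros; apply A_nonneg; lra. Qed.
Lemma Phi0 u : 0 <= u -> Phi M u = Phi M 0 - RInt (ext (A M)) 0 u.
Proof. intro. apply tail0; auto using CC_A, has_A0. Qed.
Lemma CC_S : CC (Sf M).
Proof. apply CC_sqrt, CC_Phi. Qed.
Lemma S_nonneg t : 0 <= Sf M t.
Proof. apply sqrt_pos. Qed.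

Lemma Pow m t x : 0 <= t -> t <= x ->
  RInt (fun u => A M u * Sf M u ^ m) t x <= 2 / (INR m + 2) * Sf M t ^ (m + 2).
Proof.
  intros Ht Hx. unfold Sf at 2. apply eps_lim. intros e He.
  set (pe := fun u => Phi M 0 - RInt (ext (A M)) 0 u).
  assert (Hpe : forall u, 0 <= u -> pe u = Phi M u). { intros u Hu; unfold pe; rewrite (Phi0 u Hu); auto. }
  set (G := fun u => sqrt (pe u + e) ^ (m + 2)).
  set (df := fun u => - (INR m + 2) / 2 * (ext (A M) u * sqrt (pe u + e) ^ m)).
  assert (Hdpe : forall u, is_derive (fun u => pe u + e) u (- ext (A M) u)).
  { intro u.
    assert (H2 := is_derive_minus (fun _ => Phi M 0 + e) (fun b => RInt (ext (A M)) 0 b) u zero (ext (A M) u)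
       (is_derive_const _ _) (derF (A M) CC_A u)).
    eapply is_derive_ext. 2: eapply is_derive_eq. 2: exact H2.
    { intro s. unfold pe. change (Phi M 0 + e - RInt (ext (A M)) 0 s = Phi M 0 - RInt (ext (A M)) 0 s + e). ring. }
    change (0 - ext (A M) u = - ext (A M) u). ring. }
  assert (Hder : forall u, 0 <= u -> is_derive G u (df u)).
  { intros u Hu.
    assert (Hp : 0 < pe u + e). { rewrite Hpe; auto. pose proof (Phi_nonneg u Hu). lra. }
    assert (Hs : 0 < sqrt (pe u + e)) by (apply sqrt_lt_R0; auto).
    assert (H3 := is_derive_pow _ (m + 2) u _ (is_derive_sqrt _ u _ (Hdpe u) Hp)).
    eapply is_derive_eq. exact H3.
    unfold df. replace (Init.Nat.pred (m + 2)) with (S m) by lia. rewrite plus_INR. simpl.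
    field. lra. }
  assert (Hcont : forall u, continuous df u).
  { intro u. unfold df.
    apply (continuous_mult (fun _ => - (INR m + 2) / 2) (fun u => ext (A M) u * sqrt (pe u + e) ^ m)).
    apply continuous_const.
    apply (continuous_mult (ext (A M)) (fun u => sqrt (pe u + e) ^ m)). apply CC_A.
    apply (cont_pow (fun u => sqrt (pe u + e))).
    apply (continuous_comp (fun u => pe u + e) sqrt). 2: apply continuous_sqrt.
    apply (ex_derive_continuous (K:=R_AbsRing) (V:=R_NormedModule)). eexists; apply Hdpe. }
  assert (HI : is_RInt df t x (G x - G t)).
  { apply (is_RInt_derive (V:=R_CompleteNormedModule) G df t x).
    { intros u Hu. rewrite Rmin_left in Hu by lra. apply Hder; lra. }
    intros; apply Hcont. }
  set (k := - 2 / (INR m + 2)).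
  assert (Hm : 0 < INR m + 2). { pose proof (pos_INR m). lra. }
  assert (HI2 : is_RInt (fun u => ext (A M) u * sqrt (pe u + e) ^ m) t x (k * (G x - G t))).
  { apply (is_RInt_ext (V:=R_NormedModule) (fun u => scal k (df u))).
    { intros u _. unfold df, k. change (-2 / (INR m + 2) * (- (INR m + 2) / 2 * (ext (A M) u * sqrt (pe u + e) ^ m))
        = ext (A M) u * sqrt (pe u + e) ^ m). field. lra. }
    apply (is_RInt_scal (V:=R_NormedModule)). exact HI. }
  apply Rle_trans with (k * (G x - G t)).
  { rewrite <- (is_RInt_unique (V:=R_CompleteNormedModule) _ _ _ _ HI2).
    apply RInt_le; auto.
    { apply CC_RInt; auto; try lra. apply CC_mult. apply CC_A. apply CC_pow, CC_S. }
    { eexists; exact HI2. }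
    intros u Hu. unfold ext. rewrite Rmax0_id by lra.
    apply Rmult_le_compat_l. apply A_nonneg; lra.
    apply pow_incr. split. apply S_nonneg. unfold Sf. apply sqrt_le_1_alt.
    rewrite Hpe by lra. lra. }
  assert (0 <= G x). { unfold G. apply pow_le, sqrt_pos. }
  unfold k. unfold G at 2. rewrite Hpe by lra.
  assert (0 <= 2 / (INR m + 2) * G x). { apply Rmult_le_pos; auto. apply Rlt_le, Rdiv_lt_0_compat; lra. }
  replace (-2 / (INR m + 2) * (G x - sqrt (Phi M t + e) ^ (m + 2))) with
    (2 / (INR m + 2) * sqrt (Phi M t + e) ^ (m + 2) - 2 / (INR m + 2) * G x) by (field; lra).
  lra.
Qed.
End S.

Lemma sum_bound (h : nat -> R) p X Y :
  Rabs (h 0%nat) <= X -> Rabs (h (S p)) <= X -> (forall i, (1 <= i <= p)%nat -> Rabs (h i) <= Y) ->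
  Rabs (sum_f_R0 h (S p)) <= 2 * X + INR p * Y.
Proof.
  intros H0 HS Hm. eapply Rle_trans. apply sum_f_R0_triangle.
  change (sum_f_R0 (fun i => Rabs (h i)) p + Rabs (h (S p)) <= 2 * X + INR p * Y).
  destruct p as [|q].
  { simpl. lra. }
  rewrite decomp_sum by lia. simpl Init.Nat.pred.
  assert (sum_f_R0 (fun i => Rabs (h (S i))) q <= sum_f_R0 (fun _ => Y) q).
  { apply sum_Rle. intros; apply Hm; lia. }
  rewrite sum_cte in H. lra.
Qed.

Lemma amgm a b l : 0 < l -> a * b <= (l * a ^ 2 + b ^ 2 / l) / 2.
Proof.
  intro Hl. assert (0 <= (l * a - b) ^ 2) by apply pow2_ge_0.
  apply Rmult_le_reg_l with (2 * l). lra.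
  replace (2 * l * ((l * a ^ 2 + b ^ 2 / l) / 2)) with (l * l * a ^ 2 + b ^ 2) by (field; lra).
  nra.
Qed.

Lemma le_0_of_all X c : 0 <= c -> (forall l, 0 < l -> X <= l * c) -> X <= 0.
Proof.
  intros Hc H. apply Rnot_lt_le. intro HX.
  destruct (Rle_lt_or_eq_dec 0 c Hc) as [Hc'|Hc'].
  { specialize (H (X / (2 * c))). assert (0 < X / (2 * c)) by (apply Rdiv_lt_0_compat; lra).
    specialize (H H0). replace (X / (2 * c) * c) with (X / 2) in H by (field; lra). lra. }
  specialize (H 1 Rlt_0_1). rewrite <- Hc' in H. lra.
Qed.

Definition Bnd M k := CC (Qk M k) /\ forall t, 0 <= t -> Rabs (Qk M k t) <= 4 ^ (k - 1) * A M t * Sf M t ^ (k - 2).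

Section S2.
Variable M : R -> R.
Variable HG : Good M.

Lemma Q2_eq t : Qk M 2 t = - A M t.
Proof. rewrite Qk2. reflexivity. Qed.

Lemma Bnd2 : Bnd M 2.
Proof.
  split.
  { apply CC_ext with (fun t => - A M t). intros; rewrite Q2_eq; auto. apply CC_opp, CC_A; auto. }
  intros t Ht. rewrite Q2_eq, Rabs_Ropp, Rabs_pos_eq by (apply A_nonneg; auto). simpl.
  pose proof (A_nonneg M HG t Ht). lra.
Qed.

Lemma CC_Q1 : CC (Qk M 1).
Proof. rewrite Qk1. apply CC_opp, CC_I1; auto. Qed.

Lemma Q1sq u : Rabs (Qk M 1 u) ^ 2 = sq M u.
Proof. rewrite Qk1. unfold sq. rewrite <- (pow2_abs (iint M u)), Rabs_Ropp. reflexivity. Qed.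
End S2.

Section S3.
Variable M : R -> R.
Variable HG : Good M.

Lemma CC_X0 p : CC (fun u => Rabs (Qk M 1 u) * (A M u * Sf M u ^ p)).
Proof. apply CC_mult. apply CC_abs, CC_Q1; auto. apply CC_mult. apply CC_A; auto. apply CC_pow, CC_S; auto. Qed.
Lemma CC_Z p : CC (fun u => A M u * Sf M u ^ p).
Proof. apply CC_mult. apply CC_A; auto. apply CC_pow, CC_S; auto. Qed.
Lemma CC_Y0 p : CC (fun u => A M u ^ 2 * Sf M u ^ p).
Proof. apply CC_mult. apply CC_pow, CC_A; auto. apply CC_pow, CC_S; auto. Qed.

Lemma I1 p t x : 0 <= t -> t <= x ->
  RInt (fun u => Rabs (Qk M 1 u) * (A M u * Sf M u ^ p)) t x <= A M t * Sf M t ^ (S p).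
Proof.
  intros Ht Hx.
  pose proof (A_nonneg M HG t Ht) as HAt.
  assert (Hl : forall l, 0 < l -> RInt (fun u => Rabs (Qk M 1 u) * (A M u * Sf M u ^ p)) t x
             <= (l * A M t + A M t / l * Sf M t ^ (2 * p + 2)) / 2).
  { intros l Hl.
    apply Rle_trans with (RInt (fun u => (l / 2) * sq M u + (A M t / (2 * l)) * (A M u * Sf M u ^ (2 * p))) t x).
    { apply RInt_le; auto.
      { apply CC_RInt; auto; try lra. apply CC_X0. }
      { apply CC_RInt; try lra. apply CC_plus; apply CC_mult; try apply CC_const.
        apply CC_sq; auto. apply CC_Z. }
      intros u Hu.
      pose proof (amgm (Rabs (Qk M 1 u)) (A M u * Sf M u ^ p) l Hl) as H1.
      rewrite Q1sq in H1.
      assert (E : (A M u * Sf M u ^ p) ^ 2 = A M u * (A M u * Sf M u ^ (2 * p))).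
      { replace (2 * p)%nat with (p + p)%nat by lia. rewrite pow_add. ring. }
      rewrite E in H1.
      assert (H2 : A M u * (A M u * Sf M u ^ (2 * p)) <= A M t * (A M u * Sf M u ^ (2 * p))).
      { apply Rmult_le_compat_r. apply Rmult_le_pos. apply A_nonneg; auto; lra. apply pow_le, S_nonneg.
        apply A_mono; auto; lra. }
      assert (H3 : A M u * (A M u * Sf M u ^ (2 * p)) / l <= A M t * (A M u * Sf M u ^ (2 * p)) / l).
      { unfold Rdiv. apply Rmult_le_compat_r; auto. apply Rlt_le, Rinv_0_lt_compat; auto. }
      replace (A M t / (2 * l) * (A M u * Sf M u ^ (2 * p))) with (A M t * (A M u * Sf M u ^ (2 * p)) / l / 2)
        by (field; lra).
      lra. }
    rewrite RInt_plusR, !RInt_scalR.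
    2: (apply CC_RInt; [apply CC_Z | lra | lra]).
    2: (apply CC_RInt; [apply CC_sq; exact HG | lra | lra]).
    2: (apply CC_RInt; [apply CC_mult; [apply CC_const | apply CC_sq; exact HG] | lra | lra]).
    2: (apply CC_RInt; [apply CC_mult; [apply CC_const | apply CC_Z] | lra | lra]).
    pose proof (RInt_sq_le M HG t x Ht Hx).
    pose proof (Pow M HG (2 * p) t x Ht Hx).
    assert (Hc : 2 / (INR (2 * p) + 2) <= 1).
    { pose proof (pos_INR (2 * p)). apply Rmult_le_reg_r with (INR (2 * p) + 2). lra.
      unfold Rdiv. rewrite Rmult_assoc, Rinv_l by lra. lra. }
    assert (0 <= Sf M t ^ (2 * p + 2)) by (apply pow_le, S_nonneg).
    assert (RInt (fun u => A M u * Sf M u ^ (2 * p)) t x <= Sf M t ^ (2 * p + 2)).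
    { eapply Rle_trans. exact H0. rewrite <- (Rmult_1_l (Sf M t ^ (2 * p + 2))) at 2.
      apply Rmult_le_compat_r; auto. }
    assert (0 <= A M t / (2 * l)). { apply Rmult_le_pos; auto. apply Rlt_le, Rinv_0_lt_compat; lra. }
    replace ((l * A M t + A M t / l * Sf M t ^ (2 * p + 2)) / 2) with
      (l / 2 * A M t + A M t / (2 * l) * Sf M t ^ (2 * p + 2)) by (field; lra).
    apply Rplus_le_compat. apply Rmult_le_compat_l; auto; lra. apply Rmult_le_compat_l; auto. }
  pose proof (S_nonneg M t) as HS.
  destruct (Rle_lt_or_eq_dec 0 _ HS) as [Hp | Hz].
  { assert (Hl' : 0 < Sf M t ^ (S p)) by (apply pow_lt; auto).
    specialize (Hl _ Hl').
    replace (2 * p + 2)%nat with (S p + S p)%nat in Hl by lia. rewrite pow_add in Hl.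
    replace ((Sf M t ^ S p * A M t + A M t / Sf M t ^ S p * (Sf M t ^ S p * Sf M t ^ S p)) / 2)
      with (A M t * Sf M t ^ S p) in Hl by (field; lra).
    exact Hl. }
  rewrite <- Hz. rewrite pow_i by lia. rewrite Rmult_0_r.
  apply le_0_of_all with (A M t / 2). lra.
  intros l Hl'. specialize (Hl l Hl'). rewrite <- Hz, pow_i in Hl by lia.
  replace (l * (A M t / 2)) with ((l * A M t + A M t / l * 0) / 2) by (field; lra). exact Hl.
Qed.

Lemma I2 q t x : 0 <= t -> t <= x ->
  RInt (fun u => A M u ^ 2 * Sf M u ^ q) t x <= A M t * (2 / (INR q + 2) * Sf M t ^ (q + 2)).
Proof.
  intros Ht Hx.
  apply Rle_trans with (RInt (fun u => A M t * (A M u * Sf M u ^ q)) t x).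
  { apply RInt_le; auto.
    { apply CC_RInt; try lra. apply CC_Y0. }
    { apply CC_RInt; try lra. apply CC_mult. apply CC_const. apply CC_Z. }
    intros u Hu. simpl. rewrite Rmult_1_r.
    replace (A M u * A M u * Sf M u ^ q) with (A M u * (A M u * Sf M u ^ q)) by ring.
    apply Rmult_le_compat_r. apply Rmult_le_pos. apply A_nonneg; auto; lra. apply pow_le, S_nonneg.
    apply A_mono; auto; lra. }
  rewrite RInt_scalR. 2: apply CC_RInt; try lra; apply CC_Z.
  apply Rmult_le_compat_l. apply A_nonneg; auto. apply Pow; auto.
Qed.
End S3.

Section S4.
Variable M : R -> R.
Variable HG : Good M.

Lemma step p : (forall j, (2 <= j <= S (S p))%nat -> Bnd M j) -> Bnd M (S (S (S p))).
Proof.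
  intros IH.
  assert (CCQ : forall j, (1 <= j <= S (S p))%nat -> CC (Qk M j)).
  { intros j Hj. destruct (Nat.eq_dec j 1) as [->|Hn]. apply CC_Q1; auto. apply IH; lia. }
  assert (Hq : forall t, qk M (S (S (S p))) t = sum_f_R0 (fun i => Qk M (S i) t * Qk M (S (S p - i)) t) (S p)).
  { intro; apply qk_sum. }
  assert (CCq : CC (qk M (S (S (S p))))).
  { apply CC_ext with (fun t => sum_f_R0 (fun i => Qk M (S i) t * Qk M (S (S p - i)) t) (S p)).
    { intros; rewrite Hq; auto. }
    apply (CC_sum (fun i t => Qk M (S i) t * Qk M (S (S p - i)) t)). intros i Hi. apply CC_mult; apply CCQ; lia. }
  pose (X0 := fun u => Rabs (Qk M 1 u) * (A M u * Sf M u ^ p)).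
  pose (Y0 := fun u => A M u ^ 2 * Sf M u ^ (p - 1)).
  pose (g := fun u => (2 * 4 ^ (S p)) * X0 u + (INR p * 4 ^ (S p)) * Y0 u).
  assert (CCg : CC g).
  { unfold g. apply (CC_plus (fun u => 2 * 4 ^ S p * X0 u) (fun u => INR p * 4 ^ S p * Y0 u)).
    apply (CC_mult (fun _ => 2 * 4 ^ S p) X0). apply CC_const. exact (CC_X0 M HG p).
    apply (CC_mult (fun _ => INR p * 4 ^ S p) Y0). apply CC_const. exact (CC_Y0 M HG (p - 1)). }
  assert (Hpt : forall u, 0 <= u -> Rabs (qk M (S (S (S p))) u) <= g u).
  { intros u Hu. rewrite Hq.
    replace (g u) with (2 * (4 ^ (S p) * X0 u) + INR p * (4 ^ (S p) * Y0 u)) by (unfold g; ring).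
    pose proof (proj2 (IH (S (S p)) ltac:(lia)) u Hu) as BL.
    replace (S (S p) - 1)%nat with (S p) in BL by lia. replace (S (S p) - 2)%nat with p in BL by lia.
    assert (HQ1 : 0 <= Rabs (Qk M 1 u)) by apply Rabs_pos.
    apply sum_bound.
    { rewrite Nat.sub_0_r, Rabs_mult. unfold X0.
      replace (4 ^ S p * (Rabs (Qk M 1 u) * (A M u * Sf M u ^ p))) with (Rabs (Qk M 1 u) * (4 ^ S p * A M u * Sf M u ^ p)) by ring.
      apply Rmult_le_compat_l; auto. }
    { rewrite Nat.sub_diag, Rabs_mult. unfold X0.
      replace (4 ^ S p * (Rabs (Qk M 1 u) * (A M u * Sf M u ^ p))) with ((4 ^ S p * A M u * Sf M u ^ p) * Rabs (Qk M 1 u)) by ring.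
      apply Rmult_le_compat_r; auto. }
    intros i Hi.
    pose proof (proj2 (IH (S i) ltac:(lia)) u Hu) as B1.
    replace (S i - 1)%nat with i in B1 by lia. replace (S i - 2)%nat with (i - 1)%nat in B1 by lia.
    pose proof (proj2 (IH (S (S p - i)) ltac:(lia)) u Hu) as B2.
    replace (S (S p - i) - 1)%nat with (S p - i)%nat in B2 by lia.
    replace (S (S p - i) - 2)%nat with (p - i)%nat in B2 by lia.
    rewrite Rabs_mult. eapply Rle_trans.
    { apply Rmult_le_compat; try apply Rabs_pos. exact B1. exact B2. }
    unfold Y0.
    assert (E1 : 4 ^ S p = 4 ^ i * 4 ^ (S p - i)) by (rewrite <- pow_add; f_equal; lia).
    assert (E2 : Sf M u ^ (p - 1) = Sf M u ^ (i - 1) * Sf M u ^ (p - i)) by (rewrite <- pow_add; f_equal; lia).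
    rewrite E1, E2. right. ring. }
  assert (HB : forall t, 0 <= t -> has_iint (qk M (S (S (S p)))) t /\
            Rabs (iint (qk M (S (S (S p)))) t) <= 4 ^ (S (S p)) * A M t * Sf M t ^ (S p)).
  { intros t Ht. apply ABS; auto. intros x Hx.
    pose proof (A_nonneg M HG t Ht) as HAt.
    assert (HSt : 0 <= Sf M t ^ S p) by (apply pow_le, S_nonneg).
    apply Rle_trans with (RInt g t x).
    { apply RInt_le; auto. apply CC_RInt; try lra. apply CC_abs; auto. apply CC_RInt; auto; lra.
      intros u Hu. apply Hpt. lra. }
    unfold g. rewrite RInt_plusR, !RInt_scalR.
    2: (apply CC_RInt; [exact (CC_Y0 M HG (p - 1)) | lra | lra]).
    2: (apply CC_RInt; [exact (CC_X0 M HG p) | lra | lra]).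
    2: (apply CC_RInt; [apply CC_mult; [apply CC_const | exact (CC_X0 M HG p)] | lra | lra]).
    2: (apply CC_RInt; [apply CC_mult; [apply CC_const | exact (CC_Y0 M HG (p - 1))] | lra | lra]).
    pose proof (I1 M HG p t x Ht Hx) as H1. fold X0 in H1.
    assert (H4 : 0 < 4 ^ S p) by (apply pow_lt; lra).
    assert (T1 : 2 * 4 ^ S p * RInt X0 t x <= 2 * 4 ^ S p * (A M t * Sf M t ^ S p)).
    { apply Rmult_le_compat_l; auto. lra. }
    assert (HP : 0 <= 4 ^ S p * (A M t * Sf M t ^ S p)).
    { apply Rmult_le_pos; try lra. apply Rmult_le_pos; auto. }
    destruct p as [|q].
    { replace (INR 0 * 4 ^ S 0 * RInt Y0 t x) with 0 by (simpl; ring).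
      change (4 ^ S (S 0)) with (4 * 4 ^ S 0). lra. }
    pose proof (I2 M HG q t x Ht Hx) as H2.
    assert (EY : RInt Y0 t x = RInt (fun u => A M u ^ 2 * Sf M u ^ q) t x).
    { unfold Y0. replace (S q - 1)%nat with q by lia. reflexivity. }
    rewrite <- EY in H2.
    replace (q + 2)%nat with (S (S q)) in H2 by lia.
    assert (Hq0 : 0 <= INR q) by apply pos_INR.
    rewrite S_INR.
    assert (Hc : (INR q + 1) * (2 / (INR q + 2)) <= 2).
    { replace ((INR q + 1) * (2 / (INR q + 2))) with (2 - 2 / (INR q + 2)) by (field; lra).
      assert (0 < 2 / (INR q + 2)) by (apply Rdiv_lt_0_compat; lra). lra. }
    assert (T2 : (INR q + 1) * 4 ^ S (S q) * RInt Y0 t x <= (INR q + 1) * 4 ^ S (S q) * (A M t * (2 / (INR q + 2) * Sf M t ^ S (S q)))).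
    { apply Rmult_le_compat_l. apply Rmult_le_pos; [lra | apply pow_le; lra]. exact H2. }
    assert (T3 : (INR q + 1) * 4 ^ S (S q) * (A M t * (2 / (INR q + 2) * Sf M t ^ S (S q)))
                 <= 2 * 4 ^ S (S q) * (A M t * Sf M t ^ S (S q))).
    { replace ((INR q + 1) * 4 ^ S (S q) * (A M t * (2 / (INR q + 2) * Sf M t ^ S (S q))))
        with (((INR q + 1) * (2 / (INR q + 2))) * (4 ^ S (S q) * (A M t * Sf M t ^ S (S q)))) by ring.
      apply Rle_trans with (2 * (4 ^ S (S q) * (A M t * Sf M t ^ S (S q)))).
      apply Rmult_le_compat_r; auto. right; ring. }
    change (4 ^ S (S (S q))) with (4 * 4 ^ S (S q)). lra. }
  split.
  { rewrite Qk_def. apply CC_opp. apply CC_iint; auto. apply HB; lra. }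
  intros t Ht. rewrite Qk_def, Rabs_Ropp.
  replace (S (S (S p)) - 1)%nat with (S (S p)) by lia. replace (S (S (S p)) - 2)%nat with (S p) by lia.
  apply HB; auto.
Qed.

Lemma all_Bnd k : (2 <= k)%nat -> Bnd M k.
Proof.
  intro Hk.
  assert (H : forall n, forall j, (2 <= j <= S (S n))%nat -> Bnd M j).
  { induction n as [|n IHn]; intros j Hj.
    { replace j with 2%nat by lia. apply Bnd2; auto. }
    destruct (Nat.eq_dec j (S (S (S n)))) as [->|Hne].
    { apply step. exact IHn. }
    apply IHn; lia. }
  apply (H k). lia.
Qed.
End S4.

Lemma CC_of_within (M : R -> R) :
  (forall t, 0 <= t -> filterlim M (within (fun s => 0 <= s) (locally t)) (locally (M t))) -> CC M.
Proof.
  intros HM y. unfold continuous, ext.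
  apply (filterlim_comp _ _ _ (fun z => Rmax 0 z) M (locally y) (within (fun s => 0 <= s) (locally (Rmax 0 y)))).
  { intros P HP. unfold within in HP.
    pose proof (cont_Rmax0 y (fun x => 0 <= x -> P x) HP) as H. unfold filtermap in *.
    eapply filter_imp. 2: exact H. intros z Hz. apply Hz. apply Rmax0_ge. }
  apply HM, Rmax0_ge.
Qed.

Theorem lemma2 (M : R -> R) (gamma T : R) :
  (* M continuous on [0, oo) *)
  (forall t, 0 <= t ->
     filterlim M (within (fun s => 0 <= s) (locally t)) (locally (M t))) ->
  0 < gamma ->
  (* (M3), first condition: |\int_t^oo M| <~ (1+t)^-gamma *)
  (forall t, 0 <= t -> has_iint M t) ->
  (exists C, forall t, 0 <= t -> Rabs (iint M t) <= C * Rpower (1 + t) (- gamma)) ->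
  (* (M3), second condition *)
  (forall t, 0 <= t -> has_iint (fun s => (iint M s) ^ 2) t) ->
  (exists C, forall t, 0 <= t ->
     iint (fun s => (iint M s) ^ 2) t <= C * Rpower (1 + t) (- gamma)) ->
  (* (M3), third condition *)
  has_iint (fun t => iint (fun s => (iint M s) ^ 2) t) 0 ->
  0 <= T ->
  (forall t, T <= t -> Qk M 2 t <= 0) /\
  (forall (k : nat) (t : R), (2 <= k)%nat -> T <= t ->
     Rabs (Qk M k t) <= 4 ^ (k - 1) * (- Qk M 2 t) * (sqrt (phi M t)) ^ (k - 2)).
Proof.
  intros HM Hgam HiM _ Hsq _ HA HT.
  assert (HG : Good M).
  { split. apply CC_of_within; auto. split; auto. }
  split.
  { intros t Ht. rewrite Q2_eq. pose proof (A_nonneg M HG t). lra. }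
  intros k t Hk Ht.
  destruct (all_Bnd M HG k Hk) as [_ B]. specialize (B t ltac:(lra)).
  rewrite Q2_eq, Ropp_involutive.
  replace (phi M t) with (Phi M t). exact B.
  unfold phi. replace (Qk M 2) with (fun s => - A M s).
  rewrite iint_opp. unfold Phi. ring. apply CC_A; auto. lra. apply has_A; auto; lra.
  apply functional_extensionality. intro s. rewrite Q2_eq. reflexivity.
Qed.
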